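(* Assume $\Phi_0>0$, let $\gamma>1$ and $\tau>0$, and let $C$ be the set of $\tau$-cheap edges. If $F\subseteq E$ is an $r$-edge-cover with $\tau\ge\ell_F(B)$, then $\Phi(C\cap F)\le\Phi_0/\gamma$.
   Context: Bipartite Activation Edge-Multicover setting: a bipartite multigraph $G=(A\cup B,E)$, each edge $e=ab$ ($a\in A$, $b\in B$) with non-negative activation costs $c_e^a,c_e^b$, and non-negative integer requirements $r_b$ for $b\in B$. For $J\subseteq E$, $\delta_J(v)$ is the set of edges of $J$ at $v$, $\deg_J(v)=|\delta_J(v)|$, $\ell_J(v)=\max\{c_e^v:e\in\delta_J(v)\}$ ($0$ if empty), $\ell_J(U)=\sum_{v\in U}\ell_J(v)$; $J$ is an $r$-edge-cover if $\deg_J(b)\ge r_b$ for all $b\in B$. For $b\in B$, $w_b$ is the $r_b$-th smallest value $c_e^b$ over edges $e\in E$ incident to $b$ (with multiplicity), $w_b=0$ if $r_b=0$. $\Phi(J)=\sum_{b\in B}w_b\max\{r_b-\deg_J(b),0\}$ and $\Phi_0=\Phi(\emptyset)=\sum_{b\in B}w_br_b$. Given $\gamma$ and $\tau$, an edge $e$ incident to $b\in B$ is $\tau$-cheap if $c_e^b\le\gamma\tau\cdot\frac{w_br_b}{\Phi_0}$; $C=\bigcup_{b\in B}\{e\in\delta_E(b): c_e^b\le\gamma\tau\, w_br_b/\Phi_0\}$. *)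

(* Defs.v *)
From HB Require Import structures.
From mathcomp Require Import all_boot all_order all_algebra.
Set Implicit Arguments. Unset Strict Implicit. Unset Printing Implicit Defensive.
Import Order.TTheory GRing.Theory Num.Theory.
Local Open Scope ring_scope.

(* A bipartite multigraph G = (A ∪ B, E): E is a finite type of edges,
   each edge e has endpoint ea e ∈ A and eb e ∈ B.  Costs ca e = c_e^a,
   cb e = c_e^b. *)
Section Defs.
Variables (R : realFieldType) (A B E : finType)
  (ea : E -> A) (eb : E -> B) (cb : E -> R) (r : B -> nat).

Definition deltaB (J : {set E}) (b : B) : {set E} := [set e in J | eb e == b].
Definition degB (J : {set E}) (b : B) : nat := #|deltaB J b|.

(* ell_J(b) = max { c_e^b : e ∈ delta_J(b) }, 0 if empty
   (costs are nonnegative, so max with base 0 is the right value) *)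
Definition ellB (J : {set E}) (b : B) : R :=
  \big[Num.max/0]_(e in deltaB J b) cb e.
Definition ellBset (J : {set E}) : R := \sum_(b : B) ellB J b.

(* w_b: the r_b-th smallest value of c_e^b over edges incident to b
   (with multiplicity); 0 if r_b = 0. *)
Definition wB (b : B) : R :=
  if r b is k.+1 then
    nth 0 (sort <=%R [seq cb e | e <- enum E & eb e == b]) k
  else 0.

(* Phi(J) = sum_b w_b max{r_b - deg_J(b), 0} (truncated nat subtraction) *)
Definition Phi (J : {set E}) : R := \sum_(b : B) wB b * ((r b - degB J b)%N)%:R.
Definition Phi0 : R := Phi set0.

Definition is_r_edge_cover (J : {set E}) : Prop := forall b, (r b <= degB J b)%N.

Definition cheapEdges (gamma tau : R) : {set E} :=
  [set e | cb e <= gamma * tau * (wB (eb e) * (r (eb e))%:R) / Phi0].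
End Defs.

(* Main.v *)
Require Import Defs.
From HB Require Import structures.
From mathcomp Require Import all_boot all_order all_algebra.
From mathcomp Require Import ring.
Import Order.TTheory GRing.Theory Num.Theory.
Local Open Scope ring_scope.

Theorem mainTheorem10 (R : realFieldType) (A B E : finType)
  (ea : E -> A) (eb : E -> B) (ca cb : E -> R) (r : B -> nat)
  (ca_ge0 : forall e, 0 <= ca e) (cb_ge0 : forall e, 0 <= cb e)
  (gamma tau : R) (F : {set E}) :
  0 < Phi0 eb cb r -> 1 < gamma -> 0 < tau ->
  is_r_edge_cover eb r F ->
  ellBset eb cb F <= tau ->
  Phi eb cb r (cheapEdges eb cb r gamma tau :&: F) <= Phi0 eb cb r / gamma.
Proof.
move=> P0 g1 t0 cov ellt.
set P := Phi0 eb cb r in P0 *.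
have g0 : 0 < gamma by apply: lt_trans g1.
set k := P / (gamma * tau).
have k0 : 0 < k by rewrite /k divr_gt0 // mulr_gt0.
have wge0 : forall b, 0 <= wB eb cb r b.
  move=> b; rewrite /wB; case: (r b) => // n.
  set s := sort _ _.
  have [lt|ge] := ltnP n (size s); last by rewrite nth_default.
  have : nth 0 s n \in s by rewrite mem_nth.
  rewrite mem_sort => /mapP [e _ ->]; exact: cb_ge0.
have ellge0 : forall b, 0 <= ellB eb cb F b.
  move=> b; rewrite /ellB; elim/big_ind: _ => //.
  by move=> x y hx hy; rewrite le_max hx.
have ellge : forall b e, e \in deltaB eb F b -> cb e <= ellB eb cb F b.
  by move=> b e he; rewrite /ellB (bigD1 e) //= le_max lexx.
have key : forall b, wB eb cb r b *
     ((r b - degB eb (cheapEdges eb cb r gamma tau :&: F) b)%N)%:R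
     <= ellB eb cb F b * k.
  move=> b.
  set d := degB _ _ _.
  have [le|lt] := leqP (r b) d.
    by rewrite (eqP (_ : (r b - d)%N == 0%N)) ?subn_eq0 // mulr0 mulr_ge0 // ltW.
  have : ~~ (deltaB eb F b \subset deltaB eb (cheapEdges eb cb r gamma tau :&: F) b).
    apply/negP => /subset_leq_card h.
    have := cov b; rewrite /degB => h2.
    move: lt; rewrite /d /degB => lt.
    have := leq_trans h2 h; by rewrite leqNgt lt.
  case/subsetPn => e he hne.
  move: (he); rewrite /deltaB !inE => /andP [eF /eqP ebe].
  have nC : e \notin cheapEdges eb cb r gamma tau.
    apply/negP => eC; move/negP: hne; apply; by rewrite /deltaB in_set in_setI eC eF ebe eqxx.
  move: nC; rewrite inE ebe -/P -ltNge => lt2.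
  have h1 : wB eb cb r b * ((r b - d)%N)%:R <= wB eb cb r b * (r b)%:R.
    by rewrite ler_wpM2l // ler_nat leq_subr.
  apply: (le_trans h1).
  have h3 : cb e * k <= ellB eb cb F b * k.
    by rewrite ler_wpM2r ?(ltW k0) //; apply: ellge.
  apply: le_trans h3.
  have : gamma * tau * (wB eb cb r b * (r b)%:R) / P * k <= cb e * k.
    by rewrite ler_wpM2r ?ltW.
  apply: le_trans.
  rewrite /k le_eqVlt; apply/orP; left; apply/eqP; field.
  by rewrite !gt_eqF.
rewrite /Phi.
apply: le_trans (ler_sum _ (fun b _ => key b)) _.
rewrite -mulr_suml -/(ellBset eb cb F).
apply: le_trans (_ : tau * k <= _).
  by rewrite ler_wpM2r // ltW.
rewrite /k le_eqVlt; apply/orP; left; apply/eqP; field.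
by rewrite !gt_eqF.
Qed.
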